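(* Let $G_i$ be a graph of order $n_i$, minimum degree $\delta_i$ and maximum degree $\Delta_i$, $i\in\{1,2\}$. Let $k_i\in\{2-\Delta_i,\dots,\Delta_i\}$ for $i\in\{1,2\}$ and let $k'=\max\{k_1-\delta_2,\;k_2-\delta_1,\;\min\{k_2+\Delta_1,\,k_1+\Delta_2\}\}$. Then for every integer $k\in\{k',\dots,\Delta_1+\Delta_2\}$, $$\phi_k^o(G_1\times G_2)\ge n_1\phi_{k_2}^o(G_2)+n_2\phi_{k_1}^o(G_1)-\phi_{k_1}^o(G_1)\phi_{k_2}^o(G_2).$$
   Context: All graphs are finite and simple. For a graph $G=(V,E)$, a set $S\subseteq V$ and $v\in V$, let $\delta_S(v)=|\{u\in S: uv\in E\}|$, $\overline{S}=V\setminus S$, and let $\partial S$ be the set of vertices of $\overline S$ adjacent to at least one vertex of $S$. For an integer $k$, a non-empty set $S\subseteq V$ is an offensive $k$-alliance if $\delta_S(v)\ge \delta_{\overline S}(v)+k$ for every $v\in \partial S$. A set $X\subseteq V$ is an offensive $k$-alliance free set ($k$-oaf set) if no offensive $k$-alliance $S$ satisfies $S\subseteq X$. $\phi_k^o(G)$ denotes the maximum cardinality of a $k$-oaf set in $G$. The Cartesian product $G_1\times G_2$ of $G_1=(V_1,E_1)$, $G_2=(V_2,E_2)$ has vertex set $V_1\times V_2$, with $(a,b)$ adjacent to $(c,d)$ iff either $a=c$ and $bd\in E_2$, or $b=d$ and $ac\in E_1$. *)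

(* Defs.v *)
From HB Require Import structures.
From mathcomp Require Import all_boot all_order all_algebra.
Set Implicit Arguments. Unset Strict Implicit. Unset Printing Implicit Defensive.
Import Order.TTheory GRing.Theory Num.Theory.

Definition simple_graph (T : finType) (e : rel T) : Prop :=
  symmetric e /\ irreflexive e.

Definition deg_in (T : finType) (e : rel T) (S : {set T}) (v : T) : nat :=
  #|[set u in S | e u v]|.

Definition deg (T : finType) (e : rel T) (v : T) : nat := deg_in e setT v.

(* minimum and maximum degree (for an empty vertex set both are 0) *)
Definition mindeg (T : finType) (e : rel T) : nat :=
  \big[minn/#|T|]_(v : T) deg e v.
Definition maxdeg (T : finType) (e : rel T) : nat := \max_(v : T) deg e v.

Definition boundary (T : finType) (e : rel T) (S : {set T}) : {set T} :=
  [set v in ~: S | [exists u in S, e u v]].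

Definition off_alliance (T : finType) (e : rel T) (k : int) (S : {set T}) : bool :=
  (S != set0) &&
  [forall v in boundary e S,
     ((deg_in e S v)%:Z >= (deg_in e (~: S) v)%:Z + k)%R].

Definition oaf (T : finType) (e : rel T) (k : int) (X : {set T}) : bool :=
  [forall S : {set T}, (S \subset X) ==> ~~ off_alliance e k S].

Definition phi_o (T : finType) (e : rel T) (k : int) : nat :=
  \max_(X : {set T} | oaf e k X) #|X|.

Definition cart_rel (T1 T2 : finType) (e1 : rel T1) (e2 : rel T2) : rel (T1 * T2) :=
  fun x y => ((x.1 == y.1) && e2 x.2 y.2) || ((x.2 == y.2) && e1 x.1 y.1).

(* Main.v *)
Require Import Defs.
From HB Require Import structures.
From mathcomp Require Import all_boot all_order all_algebra.
From mathcomp Require Import zify ring.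
Import Order.TTheory GRing.Theory Num.Theory.
Set Implicit Arguments. Unset Strict Implicit. Unset Printing Implicit Defensive.

Section Aux.
Variables (T1 T2 : finType) (e1 : rel T1) (e2 : rel T2).
Hypothesis irr1 : irreflexive e1.

Definition row (S : {set T1 * T2}) (b : T2) : {set T1} := [set a | (a, b) \in S].
Definition col (S : {set T1 * T2}) (a : T1) : {set T2} := [set b | (a, b) \in S].

Lemma deg_cart S a b :
  deg_in (cart_rel e1 e2) S (a, b) = deg_in e1 (row S b) a + deg_in e2 (col S a) b.
Proof.
rewrite /deg_in.
have -> : [set u in S | cart_rel e1 e2 u (a, b)] =
  ((fun a' => (a', b)) @: [set a' in row S b | e1 a' a]) :|:
  ((fun b' => (a, b')) @: [set b' in col S a | e2 b' b]).
  apply/setP => -[x y]; rewrite !inE /cart_rel /=.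
  apply/idP/idP.
  - case/andP => xyS /orP [/andP [/eqP ? h] | /andP [/eqP ? h]]; subst.
    + apply/orP; right; apply/imsetP; exists y => //; by rewrite !inE xyS h.
    + apply/orP; left; apply/imsetP; exists x => //; by rewrite !inE xyS h.
  - case/orP => /imsetP [z]; rewrite !inE => /andP [zS h] [-> ->];
      rewrite zS /= ?eqxx ?h ?orbT //.
rewrite cardsU !card_imset; last 2 first.
- by move=> u v [].
- by move=> u v [].
suff -> : ((fun a' => (a', b)) @: [set a' in row S b | e1 a' a]) :&:
  ((fun b' => (a, b')) @: [set b' in col S a | e2 b' b]) = set0 by rewrite cards0 subn0.
apply/setP => -[x y]; rewrite !inE.
apply/negP => /andP [/imsetP [z]]; rewrite !inE => /andP [_ h1] [-> ->].
by case/imsetP => w; rewrite !inE => _ [? _]; subst; rewrite irr1 in h1.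
Qed.


Lemma rowC S b : row (~: S) b = ~: row S b.
Proof. by apply/setP => x; rewrite !inE. Qed.
Lemma colC S a : col (~: S) a = ~: col S a.
Proof. by apply/setP => x; rewrite !inE. Qed.

End Aux.

Section Gen.
Variables (T : finType) (e : rel T).

Lemma deg_in_mono (A B : {set T}) v : A \subset B -> deg_in e A v <= deg_in e B v.
Proof.
move=> AB; apply: subset_leq_card; apply/subsetP => u; rewrite !inE.
by case/andP => uA ->; rewrite (subsetP AB u uA).
Qed.

Lemma deg_in_max (A : {set T}) v : deg_in e A v <= maxdeg e.
Proof.
apply: (@leq_trans (deg e v)).
  by apply: deg_in_mono; apply: subsetT.
exact: leq_bigmax.
Qed.

Lemma mindeg_le v : mindeg e <= deg e v.
Proof.
rewrite /mindeg; move: (mem_index_enum v); elim: (index_enum T) => [//|x r IH].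
rewrite inE big_cons => /orP [/eqP <-|/IH h]; first exact: geq_minl.
by apply: leq_trans h; apply: geq_minr.
Qed.

Lemma deg_in0 v : deg_in e set0 v = 0.
Proof.
apply/eqP; rewrite cards_eq0; apply/eqP/setP => u; by rewrite !inE.
Qed.

Lemma deg_inC0 v : deg_in e (~: set0) v = deg e v.
Proof. by rewrite setC0. Qed.

Lemma oafP k (X S : {set T}) : oaf e k X -> S \subset X -> S != set0 ->
  exists2 v, v \in boundary e S &
    ((deg_in e S v)%:Z < (deg_in e (~: S) v)%:Z + k)%R.
Proof.
move=> /forallP /(_ S) /implyP H SX S0; move: (H SX).
rewrite /off_alliance S0 /= negb_forall => /existsP [v].
rewrite negb_imply => /andP [vb hv]; exists v => //.
by rewrite ltNge.
Qed.

Lemma not_alliance k (S : {set T}) v : v \in boundary e S ->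
    ((deg_in e S v)%:Z < (deg_in e (~: S) v)%:Z + k)%R -> ~~ off_alliance e k S.
Proof.
move=> vb hv; rewrite /off_alliance negb_and; apply/orP; right.
rewrite negb_forall; apply/existsP; exists v; rewrite negb_imply vb /=.
by rewrite -ltNge.
Qed.

End Gen.

Lemma LA (a b c d m : nat) (k1 k : int) : (a%:Z < c%:Z + k1)%R -> b <= m ->
  (k1 + m%:Z <= k)%R -> ((a + b)%N%:Z < (c + d)%N%:Z + k)%R.
Proof. lia. Qed.
Lemma LA' (a b c d m : nat) (k1 k : int) : (b%:Z < d%:Z + k1)%R -> a <= m ->
  (k1 + m%:Z <= k)%R -> ((a + b)%N%:Z < (c + d)%N%:Z + k)%R.
Proof. lia. Qed.
Lemma LB (b p np nb mn dg : nat) (k2 k : int) : b <= p -> np <= nb -> mn <= dg ->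
  (p%:Z < np%:Z + k2)%R -> (k2 - mn%:Z <= k)%R -> ((0 + b)%N%:Z < (dg + nb)%N%:Z + k)%R.
Proof. lia. Qed.
Lemma LB' (b p np nb mn dg : nat) (k2 k : int) : b <= p -> np <= nb -> mn <= dg ->
  (p%:Z < np%:Z + k2)%R -> (k2 - mn%:Z <= k)%R -> ((b + 0)%N%:Z < (nb + dg)%N%:Z + k)%R.
Proof. lia. Qed.

Section Main.
Variables (T1 T2 : finType) (e1 : rel T1) (e2 : rel T2).
Hypothesis irr1 : irreflexive e1.

Definition Xset (X1 : {set T1}) (X2 : {set T2}) : {set T1 * T2} :=
  [set x | (x.1 \in X1) || (x.2 \in X2)].

Lemma oaf_prodA (X1 : {set T1}) (X2 : {set T2}) (k1 k2 k : int) :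
  oaf e1 k1 X1 -> oaf e2 k2 X2 ->
  (k2 - (mindeg e1)%:Z <= k)%R -> (k1 + (maxdeg e2)%:Z <= k)%R ->
  oaf (cart_rel e1 e2) k (Xset X1 X2).
Proof.
move=> o1 o2 hk2 hk1; apply/forallP => S; apply/implyP => SX.
case: (boolP (S == set0)) => [/eqP -> | S0].
  by rewrite /off_alliance eqxx.
case: (boolP [exists u in S, u.2 \notin X2]).
- case/existsP => -[a0 b] /andP [uS /= bX].
  have R0 : row S b != set0.
    by apply/set0Pn; exists a0; rewrite inE.
  have RX : row S b \subset X1.
    apply/subsetP => x; rewrite inE => xS.
    by move: (subsetP SX _ xS); rewrite inE /= (negbTE bX) orbF.
  have [a ab h] := oafP o1 RX R0.
  move: ab; rewrite inE => /andP [aR /existsP [a' /andP [a'R ea]]].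
  apply: (@not_alliance _ _ _ _ (a, b)).
    rewrite inE; apply/andP; split.
      by move: aR; rewrite !inE.
    apply/existsP; exists (a', b); rewrite -(in_set (fun a => (a, b) \in S)) -/(row S b) a'R /=.
    by rewrite /cart_rel /= eqxx ea orbT.
  rewrite !deg_cart // rowC colC.
  apply: (LA _ h (deg_in_max e2 (col S a) b) hk1).

- rewrite negb_exists => /forallP allX.
  pose P := [set b | [exists a, (a, b) \in S]].
  have P0 : P != set0.
    case/set0Pn: S0 => -[a b] abS; apply/set0Pn; exists b; rewrite inE.
    by apply/existsP; exists a.
  have PX : P \subset X2.
    apply/subsetP => b; rewrite inE => /existsP [a abS].
    by move: (allX (a, b)); rewrite abS /= negbK.
  have [b bb h] := oafP o2 PX P0.
  move: bb; rewrite inE => /andP [bP /existsP [b' /andP [b'P eb]]].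
  move: (b'P); rewrite inE => /existsP [a ab'S].
  have abS : (a, b) \notin S.
    apply/negP => abS; move: bP; rewrite !inE => /existsP []; by exists a.
  apply: (@not_alliance _ _ _ _ (a, b)).
    rewrite inE; apply/andP; split; first by rewrite inE.
    apply/existsP; exists (a, b'); rewrite ab'S /=.
    by rewrite /cart_rel /= eqxx eb.
  have r0 : row S b = set0.
    apply/setP => x; rewrite !inE; apply/negP => xbS.
    move: bP; rewrite !inE => /existsP []; by exists x.
  rewrite !deg_cart // rowC colC r0 deg_in0 deg_inC0.
  have m1 := mindeg_le e1 a.
  have : col S a \subset P.
    apply/subsetP => y; rewrite !inE => ayS; apply/existsP; by exists a.
  move=> sub.
  have s1 := deg_in_mono e2 b sub.
  have sub' : ~: P \subset ~: col S a by rewrite setCS.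
  have s2 := deg_in_mono e2 b sub'.
  exact: (LB s1 s2 m1 h hk2).
Qed.

Lemma oaf_prodB (X1 : {set T1}) (X2 : {set T2}) (k1 k2 k : int) :
  oaf e1 k1 X1 -> oaf e2 k2 X2 ->
  (k1 - (mindeg e2)%:Z <= k)%R -> (k2 + (maxdeg e1)%:Z <= k)%R ->
  oaf (cart_rel e1 e2) k (Xset X1 X2).
Proof.
move=> o1 o2 hk1 hk2; apply/forallP => S; apply/implyP => SX.
case: (boolP (S == set0)) => [/eqP -> | S0].
  by rewrite /off_alliance eqxx.
case: (boolP [exists u in S, u.1 \notin X1]).
- case/existsP => -[a b0] /andP [uS /= aX].
  have C0 : col S a != set0.
    by apply/set0Pn; exists b0; rewrite inE.
  have CX : col S a \subset X2.
    apply/subsetP => x; rewrite inE => xS.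
    by move: (subsetP SX _ xS); rewrite inE /= (negbTE aX).
  have [b bb h] := oafP o2 CX C0.
  move: bb; rewrite inE => /andP [bC /existsP [b' /andP [b'C eb]]].
  apply: (@not_alliance _ _ _ _ (a, b)).
    rewrite inE; apply/andP; split.
      by move: bC; rewrite !inE.
    apply/existsP; exists (a, b'); rewrite -(in_set (fun b => (a, b) \in S)) -/(col S a) b'C /=.
    by rewrite /cart_rel /= eqxx eb.
  rewrite !deg_cart // rowC colC.
  apply: (LA' _ h (deg_in_max e1 (row S b) a) hk2).

- rewrite negb_exists => /forallP allX.
  pose P := [set a | [exists b, (a, b) \in S]].
  have P0 : P != set0.
    case/set0Pn: S0 => -[a b] abS; apply/set0Pn; exists a; rewrite inE.
    by apply/existsP; exists b.
  have PX : P \subset X1.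
    apply/subsetP => a; rewrite inE => /existsP [b abS].
    by move: (allX (a, b)); rewrite abS /= negbK.
  have [a aa h] := oafP o1 PX P0.
  move: aa; rewrite inE => /andP [aP /existsP [a' /andP [a'P ea]]].
  move: (a'P); rewrite inE => /existsP [b a'bS].
  have abS : (a, b) \notin S.
    apply/negP => abS; move: aP; rewrite !inE => /existsP []; by exists b.
  apply: (@not_alliance _ _ _ _ (a, b)).
    rewrite inE; apply/andP; split; first by rewrite inE.
    apply/existsP; exists (a', b); rewrite a'bS /=.
    by rewrite /cart_rel /= eqxx ea orbT.
  have c0 : col S a = set0.
    apply/setP => x; rewrite !inE; apply/negP => axS.
    move: aP; rewrite !inE => /existsP []; by exists x.
  rewrite !deg_cart // rowC colC c0 deg_in0 deg_inC0.
  have m1 := mindeg_le e2 b.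
  have sub : row S b \subset P.
    apply/subsetP => y; rewrite !inE => ybS; apply/existsP; by exists b.
  have s1 := deg_in_mono e1 a sub.
  have sub' : ~: P \subset ~: row S b by rewrite setCS.
  have s2 := deg_in_mono e1 a sub'.
  exact: (LB' s1 s2 m1 h hk1).
Qed.
End Main.

Lemma oaf0 (T : finType) (e : rel T) k : oaf e k set0.
Proof.
apply/forallP => S; apply/implyP; rewrite subset0 => /eqP ->.
by rewrite /off_alliance eqxx.
Qed.

Lemma phi_att (T : finType) (e : rel T) k :
  exists2 X, oaf e k X & phi_o e k = #|X|.
Proof.
have pos : 0 < #|[pred X : {set T} | oaf e k X]|.
  by apply/card_gt0P; exists set0; rewrite inE oaf0.
case: (eq_bigmax_cond (fun X : {set T} => #|X|) pos) => X XA h.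
by exists X => //; rewrite /phi_o -h.
Qed.

Lemma card_Xset (T1 T2 : finType) (X1 : {set T1}) (X2 : {set T2}) :
  #|Xset X1 X2| + #|~: X1| * #|~: X2| = #|T1| * #|T2|.
Proof.
rewrite -cardsX -card_prod -(cardsC (Xset X1 X2)); congr (_ + _).
apply: eq_card => -[x y]; rewrite !inE /=.
by rewrite negb_or.
Qed.

Theorem corollary4 (T1 T2 : finType) (e1 : rel T1) (e2 : rel T2)
  (hG1 : simple_graph e1) (hG2 : simple_graph e2) (k1 k2 k : int) :
  (2 - (maxdeg e1)%:Z <= k1)%R -> (k1 <= (maxdeg e1)%:Z)%R ->
  (2 - (maxdeg e2)%:Z <= k2)%R -> (k2 <= (maxdeg e2)%:Z)%R ->
  (Num.max (k1 - (mindeg e2)%:Z)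
     (Num.max (k2 - (mindeg e1)%:Z)
        (Num.min (k2 + (maxdeg e1)%:Z) (k1 + (maxdeg e2)%:Z))) <= k)%R ->
  (k <= (maxdeg e1)%:Z + (maxdeg e2)%:Z)%R ->
  ((#|T1|)%:Z * (phi_o e2 k2)%:Z + (#|T2|)%:Z * (phi_o e1 k1)%:Z
     - (phi_o e1 k1)%:Z * (phi_o e2 k2)%:Z
   <= (phi_o (cart_rel e1 e2) k)%:Z)%R.
Proof.
move=> _ _ _ _ hk _.
move: hk; rewrite !ge_max ge_min => /andP [h1 /andP [h2 h3]].
have [X1 o1 ->] := phi_att e1 k1.
have [X2 o2 ->] := phi_att e2 k2.
have irr1 := hG1.2.
have oX : oaf (cart_rel e1 e2) k (Xset X1 X2).
  case/orP: h3 => h3.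
  - exact: (oaf_prodB irr1 o1 o2 h1 h3).
  - exact: (oaf_prodA irr1 o1 o2 h2 h3).
have hphi : #|Xset X1 X2| <= phi_o (cart_rel e1 e2) k.
  by rewrite /phi_o; exact: (leq_bigmax_cond _ oX).
have hc := card_Xset X1 X2.
have c1 := cardsC X1.
have c2 := cardsC X2.
have hX : #|Xset X1 X2| = #|X1| * #|X2| + #|X1| * #|~: X2| + #|~: X1| * #|X2|.
  apply/(@addIn (#|~: X1| * #|~: X2|)); rewrite hc -c1 -c2.
  ring.
apply: le_trans _ (_ : (#|Xset X1 X2|)%:Z <= _)%R; last by rewrite lez_nat.
rewrite hX -c1 -c2 !PoszD !PoszM.
rewrite le_eqVlt; apply/orP; left; apply/eqP; ring.
Qed.
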